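(* Let $X$ be a space having the metric sparsification property with constant $c\in(0,1]$ and function $f:\mathbb{N}\to\mathbb{N}$. Then for every $\omega\in\partial X$, the limit space $(X(\omega),d_\omega)$ has the metric sparsification property with the same constant $c$ and the same function $f$.
   Context: A *space* is a metric space $(X,d)$ that is strongly discrete (the set $\{d(x,y):x,y\in X\}$ is a discrete subset of $\mathbb{R}$) and has bounded geometry (for every $r>0$, $\sup_{x\in X}|B(x;r)|<\infty$). Metric sparsification property (MSP) with constant $c\in(0,1]$: there is a non-decreasing $f:\mathbb{N}\to\mathbb{N}$ such that for every $m\in\mathbb{N}$ and every finite positive measure $\mu$ on $X$ there is $\Omega=\bigsqcup_{i\in I}\Omega_i\subseteq X$ with $d(\Omega_i,\Omega_j)\ge m$ for $i\ne j$, $\operatorname{diam}(\Omega_i)\le f(m)$ for all $i$, and $\mu(\Omega)\ge c\mu(X)$. Ultrafilters: $\beta X$ is the Stone–Čech compactification (ultrafilters are finitely additive $\omega:\mathcal{P}(X)\to\{0,1\}$ with $\omega(X)=1$), $\partial X=\beta X\setminus X$. If $\omega(D)=1$ and $g:D\to K$, $K$ compact Hausdorff, $\lim_{x\to\omega}g(x)$ is the unique $k$ with $\omega(g^{-1}(U))=1$ for every neighbourhood $U$ of $k$. A partial translation is a bijection $t:D\to R$ between subsets of $X$ with $\sup_{x\in D}d(x,t(x))<\infty$; it is compatible with $\omega$ if $\omega(D)=1$, and then $t(\omega):=\lim_{x\to\omega}t(x)\in\beta X$. $X(\omega)$ is the set of all $t(\omega)$ with $t$ compatible with $\omega$; for a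 compatible family $\{t_\alpha\}_{\alpha\in X(\omega)}$ ($t_\alpha$ compatible with $\omega$, $t_\alpha(\omega)=\alpha$), $d_\omega(\alpha,\beta)=\lim_{x\to\omega}d(t_\alpha(x),t_\beta(x))$ is a metric on $X(\omega)$ independent of the family. *)

(* Defs.v *)
From Stdlib Require Import Reals List ClassicalEpsilon.
Open Scope R_scope.

Definition is_metric {X : Type} (d : X -> X -> R) : Prop :=
  (forall x y, 0 <= d x y) /\
  (forall x y, d x y = 0 <-> x = y) /\
  (forall x y, d x y = d y x) /\
  (forall x y z, d x z <= d x y + d y z).

Definition strongly_discrete {X : Type} (d : X -> X -> R) : Prop :=
  forall x y, exists eps, 0 < eps /\
    forall u v, Rabs (d u v - d x y) < eps -> d u v = d x y.

Definition bounded_geometry {X : Type} (d : X -> X -> R) : Prop :=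
  forall r, 0 < r -> exists N : nat, forall (x : X) (l : list X),
    NoDup l -> (forall y, In y l -> d x y <= r) -> (length l <= N)%nat.

Definition is_space {X : Type} (d : X -> X -> R) : Prop :=
  is_metric d /\ strongly_discrete d /\ bounded_geometry d.

Definition finite_pos_measure {T : Type} (mu : (T -> Prop) -> R) : Prop :=
  (forall A, 0 <= mu A) /\
  (forall A : nat -> T -> Prop,
     (forall i j x, i <> j -> A i x -> A j x -> False) ->
     infinite_sum (fun n => mu (A n)) (mu (fun x => exists n, A n x))).

Definition MSP {T : Type} (dist : T -> T -> R) (c : R) (f : nat -> nat) : Prop :=
  (forall m n, (m <= n)%nat -> (f m <= f n)%nat) /\
  forall (m : nat) (mu : (T -> Prop) -> R), finite_pos_measure mu ->
    exists (I : Type) (Om : I -> T -> Prop),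
      (forall i j x, i <> j -> Om i x -> Om j x -> False) /\
      (forall i j x y, i <> j -> Om i x -> Om j y -> INR m <= dist x y) /\
      (forall i x y, Om i x -> Om i y -> dist x y <= INR (f m)) /\
      c * mu (fun _ => True) <= mu (fun x => exists i, Om i x).

Record ultrafilter (X : Type) := {
  uf :> (X -> Prop) -> Prop;
  uf_full : uf (fun _ => True);
  uf_empty : ~ uf (fun _ => False);
  uf_mono : forall A B : X -> Prop, (forall x, A x -> B x) -> uf A -> uf B;
  uf_inter : forall A B, uf A -> uf B -> uf (fun x => A x /\ B x);
  uf_ultra : forall A : X -> Prop, uf A \/ uf (fun x => ~ A x)
}.
Arguments uf {X}.

(** omega lies in the boundary dX = beta X \ X (X = principal ultrafilters) *)
Definition in_boundary {X : Type} (w : ultrafilter X) : Prop :=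
  ~ exists x : X, forall A : X -> Prop, uf w A <-> A x.

Definition partial_translation {X : Type} (d : X -> X -> R)
    (D : X -> Prop) (t : X -> X) : Prop :=
  (forall x y, D x -> D y -> t x = t y -> x = y) /\
  (exists K, forall x, D x -> d x (t x) <= K).

Definition compatible {X : Type} (d : X -> X -> R) (w : ultrafilter X)
    (D : X -> Prop) (t : X -> X) : Prop :=
  partial_translation d D t /\ uf w D.

(** lim_{x -> w} t(x) = a in beta X: for every basic neighbourhood
    {b | b(A) = 1} of a, w({x in D | t x in A}) = 1 *)
Definition ulim_beta {X : Type} (w : ultrafilter X) (D : X -> Prop)
    (t : X -> X) (a : ultrafilter X) : Prop :=
  forall A : X -> Prop, uf a A -> uf w (fun x => D x /\ A (t x)).

Definition ulim_R {X : Type} (w : ultrafilter X) (D : X -> Prop)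
    (g : X -> R) (r : R) : Prop :=
  forall eps, 0 < eps -> uf w (fun x => D x /\ Rabs (g x - r) < eps).

Definition translate_to {X : Type} (d : X -> X -> R) (w : ultrafilter X)
    (D : X -> Prop) (t : X -> X) (a : ultrafilter X) : Prop :=
  compatible d w D t /\ ulim_beta w D t a.

Definition Xlim {X : Type} (d : X -> X -> R) (w : ultrafilter X) : Type :=
  { a : ultrafilter X | exists D t, translate_to d w D t a }.

(** d_w(a,b) = lim_{x -> w} d(t_a x, t_b x), for (any) compatible t_a, t_b
    with t_a(w) = a, t_b(w) = b (the value is independent of the choice). *)
Definition d_lim {X : Type} (d : X -> X -> R) (w : ultrafilter X)
    (a b : Xlim d w) : R :=
  epsilon (inhabits 0%R) (fun r =>
    forall Da ta Db tb,
      translate_to d w Da ta (proj1_sig a) ->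
      translate_to d w Db tb (proj1_sig b) ->
      ulim_R w (fun x => Da x /\ Db x) (fun x => d (ta x) (tb x)) r).

(* Main.v *)
Require Import Defs.
From Stdlib Require Import Reals.
From Stdlib Require Import Lra Lia List ClassicalEpsilon Classical FunctionalExtensionality PropExtensionality ProofIrrelevance Cantor.
Open Scope R_scope.

Lemma pred_ext {T : Type} (P Q : T -> Prop) : (forall x, P x <-> Q x) -> P = Q.
Proof. intro H. apply functional_extensionality; intro x. apply propositional_extensionality; auto. Qed.

Lemma mu_ext {T : Type} (mu : (T -> Prop) -> R) (P Q : T -> Prop) :
  (forall x, P x <-> Q x) -> mu P = mu Q.
Proof. intro H. now rewrite (pred_ext P Q H). Qed.

Lemma sum_const (a : R) n : sum_f_R0 (fun _ => a) n = INR (S n) * a.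
Proof. induction n; simpl sum_f_R0. simpl; lra. rewrite IHn. rewrite !S_INR. lra. Qed.

Lemma mu_empty {T : Type} (mu : (T -> Prop) -> R) :
  finite_pos_measure mu -> mu (fun _ => False) = 0.
Proof.
  intros [Hpos Hadd].
  specialize (Hadd (fun _ _ => False)). 
  assert (H : infinite_sum (fun _ => mu (fun _ : T => False)) (mu (fun _ => False))).
  { assert (E : mu (fun x => exists n : nat, (fun _ _ => False) n x) = mu (fun _ : T => False)).
    { apply mu_ext. intros x; split; [intros [n Hn]; exact Hn | intros []]. }
    assert (H1 := Hadd ltac:(intros; contradiction)). cbv beta in H1, E. rewrite E in H1. exact H1. }
  set (a := mu (fun _ => False)) in *. assert (0 <= a) by apply Hpos.
  destruct (Rle_lt_or_eq_dec 0 a H0) as [Hlt|]; [|auto].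
  exfalso. destruct (H a Hlt) as [N HN]. specialize (HN (S N) (Nat.le_succ_diag_r N)).
  rewrite sum_const in HN. unfold Rdist in HN. rewrite !S_INR in HN.
  assert (0 <= INR N) by apply pos_INR.
  rewrite Rabs_right in HN by nra. nra.
Qed.

Lemma sum_two (s : nat -> R) : (forall n, (2 <= n)%nat -> s n = 0) ->
  infinite_sum s (s 0%nat + s 1%nat).
Proof.
  intros Hz eps Heps. exists 1%nat. intros n Hn.
  assert (sum_f_R0 s n = s 0%nat + s 1%nat).
  { induction n. lia. destruct n. simpl. lra.
    change (sum_f_R0 s (S (S n))) with (sum_f_R0 s (S n) + s (S (S n))).
    rewrite (Hz (S (S n))) by lia. rewrite IHn by lia. lra. }
  unfold Rdist. rewrite H. rewrite Rminus_diag, Rabs_R0. auto.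
Qed.

Lemma mu_add {T : Type} (mu : (T -> Prop) -> R) (A B : T -> Prop) :
  finite_pos_measure mu -> (forall x, A x -> B x -> False) ->
  mu (fun x => A x \/ B x) = mu A + mu B.
Proof.
  intros Hmu Hdis. pose proof (mu_empty mu Hmu) as H0. destruct Hmu as [Hpos Hadd].
  set (S := fun (n : nat) => match n with 0%nat => A | 1%nat => B | _ => fun _ => False end).
  assert (Hs := Hadd S).
  assert (Hd : forall i j x, i <> j -> S i x -> S j x -> False).
  { intros [|[|i]] [|[|j]] x Hij; simpl; intros; try lia; eauto; contradiction. }
  specialize (Hs Hd).
  assert (Hu : mu (fun x => exists n, S n x) = mu (fun x => A x \/ B x)).
  { apply mu_ext. intro x; split.
    - intros [[|[|n]] Hn]; simpl in Hn; auto; contradiction.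
    - intros [H|H]; [exists 0%nat|exists 1%nat]; exact H. }
  rewrite Hu in Hs.
  assert (Hs2 : infinite_sum (fun n => mu (S n)) (mu (S 0%nat) + mu (S 1%nat))).
  { apply sum_two. intros [|[|n]] Hn; try lia. exact H0. }
  exact (uniqueness_sum _ _ _ Hs Hs2).
Qed.

Lemma mu_mono {T : Type} (mu : (T -> Prop) -> R) (A B : T -> Prop) :
  finite_pos_measure mu -> (forall x, A x -> B x) -> mu A <= mu B.
Proof.
  intros Hmu H.
  rewrite (mu_ext mu B (fun x => A x \/ (B x /\ ~ A x))).
  rewrite mu_add; auto. destruct Hmu as [Hp _]. specialize (Hp (fun x => B x /\ ~ A x)). lra.
  intros x Ha [_ Hn]; auto.
  intro x; split. intro Hb. destruct (classic (A x)); auto. intros [Ha|[Hb _]]; auto.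
Qed.

Lemma uf_nonempty {X} (w : ultrafilter X) P : uf w P -> exists x, P x.
Proof.
  intro H. apply NNPP; intro Hn. apply (uf_empty X w).
  apply (uf_mono X w P); auto. intros x Hx; apply Hn; eauto.
Qed.

Lemma uf_inter3 {X} (w : ultrafilter X) A B C :
  uf w A -> uf w B -> uf w C -> uf w (fun x => A x /\ B x /\ C x).
Proof. intros. apply (uf_mono X w (fun x => A x /\ (B x /\ C x))); auto.
  apply uf_inter; auto. apply uf_inter; auto. Qed.

Lemma uf_not {X} (w : ultrafilter X) A : ~ uf w A -> uf w (fun x => ~ A x).
Proof. intro H. destruct (uf_ultra X w A); tauto. Qed.

Lemma uf_notnot {X} (w : ultrafilter X) A : uf w (fun x => ~ A x) -> ~ uf w A.
Proof. intros H1 H2. apply (uf_empty X w). apply (uf_mono X w (fun x => A x /\ ~ A x)).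
  tauto. apply uf_inter; auto. Qed.

Lemma uf_conv {X} (w a : ultrafilter X) D t (A : X -> Prop) :
  ulim_beta w D t a -> uf w (fun x => D x /\ A (t x)) -> uf a A.
Proof.
  intros Hl H. destruct (uf_ultra X a A) as [|Hn]; auto. exfalso.
  pose proof (Hl _ Hn) as H2. apply (uf_empty X w).
  apply (uf_mono X w (fun x => (D x /\ A (t x)) /\ (D x /\ ~ A (t x)))).
  tauto. apply uf_inter; auto.
Qed.

Lemma uf_eq {X} (u v : ultrafilter X) : (forall A, uf u A <-> uf v A) -> u = v.
Proof.
  intro H. assert (E : uf u = uf v). { apply functional_extensionality; intro A; apply propositional_extensionality; auto. }
  destruct u as [u1 u2 u3 u4 u5 u6], v as [v1 v2 v3 v4 v5 v6]. simpl in E. subst v1.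
  f_equal; apply proof_irrelevance.
Qed.

Lemma uf_fin_union {X} (w : ultrafilter X) (P : X -> Prop) (C : nat -> X -> Prop) M :
  uf w P -> (forall x, P x -> exists i, (i < M)%nat /\ C i x) ->
  exists i, (i < M)%nat /\ uf w (fun x => P x /\ C i x).
Proof.
  revert P. induction M; intros P HP Hc.
  - destruct (uf_nonempty w P HP) as [x Hx]. destruct (Hc x Hx) as [i [Hi _]]; lia.
  - destruct (uf_ultra X w (fun x => P x /\ C M x)) as [H|H].
    + exists M; split; auto.
    + destruct (IHM (fun x => P x /\ ~ (P x /\ C M x))) as [i [Hi Hu]].
      apply uf_inter; auto.
      intros x [Hx Hn]. destruct (Hc x Hx) as [i [Hi Hci]].
      destruct (Nat.eq_dec i M). subst; tauto. exists i; split; auto; lia.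
      exists i; split; [lia|]. apply (uf_mono X w _ _ (fun x Hx => conj (proj1 (proj1 Hx)) (proj2 Hx)) Hu).
Qed.

Lemma uf_list {X A} (w : ultrafilter X) (l : list A) (Q : A -> X -> Prop) :
  (forall a, In a l -> uf w (Q a)) -> uf w (fun x => forall a, In a l -> Q a x).
Proof.
  induction l; intros H.
  - apply (uf_mono X w (fun _ => True)). intros x _ a []. apply uf_full.
  - apply (uf_mono X w (fun x => Q a x /\ forall b, In b l -> Q b x)).
    intros x [H1 H2] b [<-|Hb]; auto.
    apply uf_inter. apply H; left; auto. apply IHl. intros; apply H; right; auto.
Qed.

Lemma max_list {T} (P : T -> Prop) N :
  (forall l, NoDup l -> (forall x, In x l -> P x) -> (length l <= N)%nat) ->
  exists l, NoDup l /\ forall x, P x <-> In x l.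
Proof.
  intro Hb.
  set (Q := fun n => exists l, NoDup l /\ (forall x, In x l -> P x) /\ length l = n).
  assert (K : forall k, (exists n, Q n /\ forall m, Q m -> (m <= n)%nat) \/ (exists n, Q n /\ (k <= n)%nat)).
  { induction k.
    - right. exists 0%nat. split; [|lia]. exists nil. repeat split; auto. constructor. intros x [].
    - destruct IHk as [H|[n [Hn Hk]]]; [left; auto|].
      destruct (classic (exists m, Q m /\ (S k <= m)%nat)) as [H|H]; [right; auto|].
      left. exists n; split; auto. intros m Hm.
      destruct (Nat.le_gt_cases m n); auto. exfalso; apply H; exists m; split; auto; lia. }
  destruct (K (S N)) as [[n [[l [Hl1 [Hl2 Hl3]]] Hmax]]|[n [[l [Hl1 [Hl2 Hl3]]] Hn]]].
  - exists l; split; auto. intro x; split; auto. intro Hx.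
    apply NNPP; intro Hnin. assert (Q (S n)). { exists (x :: l). repeat split.
      constructor; auto. intros y [<-|Hy]; auto. simpl; lia. }
    specialize (Hmax _ H); lia.
  - specialize (Hb l Hl1 Hl2). lia.
Qed.

Lemma nat_above (r : R) : exists n : nat, r <= INR n.
Proof. destruct (INR_archimed 1 r) as [n Hn]; [lra|]. exists n; lra. Qed.

Lemma X_enum {X} (d : X -> X -> R) (x0 : X) : bounded_geometry d ->
  exists e : nat -> X, forall y, exists k, e k = y.
Proof.
  intro Hbg.
  assert (HL : forall n : nat, exists l, NoDup l /\ forall y, d x0 y <= INR n + 1 <-> In y l).
  { intro n. destruct (Hbg (INR n + 1)) as [N HN]. pose proof (pos_INR n); lra.
    apply (max_list _ N). intros l Hl Hin. apply (HN x0 l Hl Hin). }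
  set (Lb := fun n => epsilon (inhabits nil) (fun l => NoDup l /\ forall y, d x0 y <= INR n + 1 <-> In y l)).
  exists (fun k => let (i, j) := of_nat k in nth j (Lb i) x0).
  intro y. destruct (nat_above (d x0 y)) as [n Hn].
  pose proof (epsilon_spec (inhabits nil) _ (HL n)) as [_ H]. fold (Lb n) in H.
  assert (Hy : In y (Lb n)) by (apply H; lra).
  destruct (In_nth _ _ x0 Hy) as [j [_ Hj]].
  exists (to_nat (n, j)). rewrite cancel_of_to. exact Hj.
Qed.



Fixpoint cols (M : nat) (conf : nat -> nat -> Prop) (n : nat) : list nat :=
  match n with
  | O => nil
  | S n' => let l := cols M conf n' in
      l ++ (epsilon (inhabits 0%nat) (fun c => (c < M)%nat /\
              forall k, (k < n')%nat -> conf k n' -> nth k l 0%nat <> c)) :: nil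
  end.

Lemma cols_len M conf n : length (cols M conf n) = n.
Proof. induction n; simpl; auto. rewrite length_app, IHn; simpl; lia. Qed.

Lemma cols_stable M conf n m k : (k < n)%nat -> (n <= m)%nat ->
  nth k (cols M conf m) 0%nat = nth k (cols M conf n) 0%nat.
Proof.
  intros Hk Hnm. induction Hnm; auto. simpl. rewrite app_nth1; auto.
  rewrite cols_len; lia.
Qed.

Lemma coloring {X} (d : X -> X -> R) (x0 : X) (r : R) : is_metric d -> bounded_geometry d -> 0 < r ->
  exists (M : nat) (c : X -> nat), (forall y, (c y < M)%nat) /\ forall y z, y <> z -> d y z <= r -> c y <> c z.
Proof.
  intros Hm Hbg Hr. destruct Hm as [_ [_ [Hsym _]]].
  destruct (X_enum d x0 Hbg) as [e He].
  destruct (Hbg r Hr) as [N HN].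
  set (code := fun y => epsilon (inhabits 0%nat) (fun k => e k = y)).
  assert (Hcode : forall y, e (code y) = y) by (intro y; exact (epsilon_spec _ _ (He y))).
  set (conf := fun k n => e k <> e n /\ d (e k) (e n) <= r /\ code (e k) = k).
  set (M := S N).
  set (col := fun n => nth n (cols M conf (S n)) 0%nat).
  assert (Hcol : forall n k, (k < n)%nat -> nth k (cols M conf n) 0%nat = col k).
  { intros n k Hk. unfold col. apply (cols_stable M conf (S k) n k); lia. }
  assert (Hfree : forall n, exists c, (c < M)%nat /\ forall k, (k < n)%nat -> conf k n -> col k <> c).
  { intro n. apply NNPP; intro Hno.
    assert (Hall : forall c, (c < M)%nat -> exists k, (k < n)%nat /\ conf k n /\ col k = c).
    { intros c Hc. apply NNPP; intro H'. apply Hno. exists c; split; auto.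
      intros k Hk Hck Heq. apply H'; eauto. }
    set (g := fun c => e (epsilon (inhabits 0%nat) (fun k => (k < n)%nat /\ conf k n /\ col k = c))).
    assert (Hg : forall c, (c < M)%nat -> exists k, g c = e k /\ (k < n)%nat /\ conf k n /\ col k = c).
    { intros c Hc. pose proof (epsilon_spec (inhabits 0%nat) _ (Hall c Hc)) as Hs.
      eexists; split; [reflexivity|exact Hs]. }
    assert (Hlen := HN (e n) (map g (seq 0 M))).
    rewrite length_map, length_seq in Hlen. unfold M in Hlen.
    enough (S N <= N)%nat by lia. apply Hlen.
    - apply NoDup_map_NoDup_ForallPairs; [|apply seq_NoDup].
      intros c c' Hc Hc' Heq. apply in_seq in Hc, Hc'.
      destruct (Hg c ltac:(lia)) as [k [Hk1 [_ [[_ [_ Hk2]] Hk3]]]].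
      destruct (Hg c' ltac:(lia)) as [k' [Hk1' [_ [[_ [_ Hk2']] Hk3']]]].
      rewrite Hk1, Hk1' in Heq. rewrite <- Hk3, <- Hk3', <- Hk2, <- Hk2', Heq. reflexivity.
    - intros y Hy. apply in_map_iff in Hy. destruct Hy as [c [<- Hc]]. apply in_seq in Hc.
      destruct (Hg c ltac:(lia)) as [k [-> [_ [[_ [Hd _]] _]]]]. rewrite Hsym; exact Hd. }
  assert (Hspec : forall n, (col n < M)%nat /\ forall k, (k < n)%nat -> conf k n -> col k <> col n).
  { intros n. 
    assert (E : col n = epsilon (inhabits 0%nat) (fun c => (c < M)%nat /\
              forall k, (k < n)%nat -> conf k n -> nth k (cols M conf n) 0%nat <> c)).
    { unfold col. simpl. rewrite app_nth2; rewrite cols_len; [|lia]. rewrite Nat.sub_diag. reflexivity. }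
    assert (Ex : exists c, (c < M)%nat /\ forall k, (k < n)%nat -> conf k n -> nth k (cols M conf n) 0%nat <> c).
    { destruct (Hfree n) as [c [Hc1 Hc2]]. exists c; split; auto. intros k' Hk'. rewrite Hcol; auto. }
    pose proof (epsilon_spec (inhabits 0%nat) _ Ex) as [Hb Hs]. rewrite <- E in Hs, Hb.
    split; auto. intros k Hk Hc.
    specialize (Hs k Hk Hc). rewrite Hcol in Hs; auto. }
  assert (Hprop : forall n k, (k < n)%nat -> conf k n -> col k <> col n) by (intros n; apply Hspec).
  exists M, (fun y => col (code y)). split. intro y; apply Hspec. intros y z Hyz Hd.
  assert (code y <> code z). { intro E. apply Hyz. rewrite <- (Hcode y), <- (Hcode z), E; auto. }
  destruct (Nat.lt_gt_cases (code y) (code z)) as [[Hlt|Hlt] _]; auto.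
  - apply Hprop; auto. unfold conf. rewrite !Hcode. auto.
  - intro E; symmetry in E; revert E. apply Hprop; auto. unfold conf. rewrite !Hcode. rewrite Hsym; auto.
Qed.

Lemma agree {X} (d : X -> X -> R) (w : ultrafilter X) D t D' t' a :
  is_metric d -> bounded_geometry d ->
  translate_to d w D t a -> translate_to d w D' t' a ->
  uf w (fun x => D x /\ D' x /\ t x = t' x).
Proof.
  intros Hm Hbg [[[_ [K HK]] HD] Hl] [[[_ [K' HK']] HD'] Hl'].
  pose proof Hm as [_ [_ [Hsym Htri]]].
  apply NNPP; intro Hn. apply uf_not in Hn.
  assert (HF : uf w (fun x => D x /\ D' x /\ t x <> t' x)).
  { apply (uf_mono X w (fun x => D x /\ D' x /\ ~ (D x /\ D' x /\ t x = t' x))).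
    intros x [H1 [H2 H3]]. repeat split; auto. apply uf_inter3; auto. }
  destruct (uf_nonempty w _ HF) as [x0 _].
  set (r := Rabs K + Rabs K' + 1).
  destruct (coloring d x0 r Hm Hbg) as [M [c [Hc1 Hc2]]]. unfold r; pose proof (Rabs_pos K); pose proof (Rabs_pos K'); lra.
  destruct (uf_fin_union w _ (fun i x => c (t x) = i) M HF) as [i [_ Hi]].
  { intros x _. exists (c (t x)); split; auto. }
  assert (Ha : uf a (fun y => c y = i)).
  { apply (uf_conv w a D t _ Hl). apply (uf_mono X w _ _ (fun x Hx => conj (proj1 (proj1 Hx)) (proj2 Hx)) Hi). }
  assert (Hb : uf a (fun y => ~ c y = i)).
  { apply (uf_conv w a D' t' _ Hl').
    apply (uf_mono X w (fun x => (D x /\ D' x /\ t x <> t' x) /\ c (t x) = i)); auto.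
    intros x [[H1 [H2 H3]] H4]. split; auto. intro E. apply (Hc2 (t x) (t' x)); auto; [|congruence].
    specialize (HK x H1); specialize (HK' x H2).
    pose proof (Htri (t x) x (t' x)). rewrite (Hsym (t x) x) in H.
    pose proof (Rle_abs K); pose proof (Rle_abs K'). unfold r. lra. }
  exact (uf_notnot a _ Hb Ha).
Qed.

Lemma distinct_lim {X} (d : X -> X -> R) (w : ultrafilter X) D t D' t' a b :
  translate_to d w D t a -> translate_to d w D' t' b -> a <> b ->
  uf w (fun x => D x /\ D' x /\ t x <> t' x).
Proof.
  intros [[_ HD] Hl] [[_ HD'] Hl'] Hab. apply NNPP; intro Hn. apply uf_not in Hn. apply Hab.
  assert (HE : uf w (fun x => D x /\ D' x /\ t x = t' x)).
  { apply (uf_mono X w (fun x => D x /\ D' x /\ ~ (D x /\ D' x /\ t x <> t' x))).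
    intros x [H1 [H2 H3]]. repeat split; auto. apply NNPP; intro; apply H3; auto. apply uf_inter3; auto. }
  assert (Hsub : forall (u v : ultrafilter X) D t D' t', ulim_beta w D t u -> ulim_beta w D' t' v ->
     uf w (fun x => D x /\ D' x /\ t x = t' x) -> forall A, uf u A -> uf v A).
  { clear. intros u v D t D' t' Hu Hv HE A HA. apply (uf_conv w v D' t' _ Hv).
    apply (uf_mono X w (fun x => (D x /\ A (t x)) /\ (D x /\ D' x /\ t x = t' x))).
    intros x [[H1 H2] [H3 [H4 H5]]]. split; auto. congruence.
    apply uf_inter; auto. }
  apply uf_eq. intro A; split.
  - apply (Hsub a b D t D' t'); auto.
  - apply (Hsub b a D' t' D t); auto.
    apply (uf_mono X w _ _ (fun x H => conj (proj1 (proj2 H)) (conj (proj1 H) (eq_sym (proj2 (proj2 H)))))). exact HE.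
Qed.

Lemma ulim_exists {X} (w : ultrafilter X) (D : X -> Prop) (g : X -> R) K :
  uf w D -> (forall x, D x -> 0 <= g x <= K) -> exists r, ulim_R w D g r.
Proof.
  intros HD Hb.
  set (E := fun s => uf w (fun x => D x /\ s <= g x)).
  assert (E0 : E 0). { apply (uf_mono X w D); auto. intros x Hx; split; auto; apply Hb; auto. }
  assert (Ebd : bound E).
  { exists K. intros s Hs. apply Rnot_lt_le; intro Hlt.
    destruct (uf_nonempty w _ Hs) as [x [Hx Hsx]]. specialize (Hb x Hx); lra. }
  destruct (completeness E Ebd (ex_intro _ 0 E0)) as [r [Hub Hlub]].
  exists r. intros eps Heps.
  assert (H1 : exists s, E s /\ r - eps/2 < s).
  { apply NNPP; intro Hn. assert (r <= r - eps/2). apply Hlub. intros s Hs.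
    apply Rnot_lt_le; intro; apply Hn; eauto. lra. }
  destruct H1 as [s [Hs Hrs]].
  assert (H2 : ~ E (r + eps/2)). { intro H. specialize (Hub _ H); lra. }
  apply uf_not in H2.
  apply (uf_mono X w (fun x => (D x /\ s <= g x) /\ ~ (D x /\ r + eps/2 <= g x))).
  - intros x [[Hx H3] H4]. split; auto. assert (g x < r + eps/2) by (apply Rnot_le_lt; auto).
    apply Rabs_def1; lra.
  - apply uf_inter; auto.
Qed.

Lemma ulim_le {X} (w : ultrafilter X) (D : X -> Prop) (g : X -> R) r h :
  ulim_R w D g r -> uf w (fun x => D x /\ g x <= h) -> r <= h.
Proof.
  intros Hl H. apply Rnot_lt_le; intro Hlt.
  pose proof (Hl (r - h) ltac:(lra)) as H2.
  destruct (uf_nonempty w _ (uf_inter X w _ _ H H2)) as [x [[_ H3] [_ H4]]].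
  apply Rabs_def2 in H4. lra.
Qed.

Lemma ulim_ge {X} (w : ultrafilter X) (D : X -> Prop) (g : X -> R) r h :
  ulim_R w D g r -> uf w (fun x => D x /\ h <= g x) -> h <= r.
Proof.
  intros Hl H. apply Rnot_lt_le; intro Hlt.
  pose proof (Hl (h - r) ltac:(lra)) as H2.
  destruct (uf_nonempty w _ (uf_inter X w _ _ H H2)) as [x [[_ H3] [_ H4]]].
  apply Rabs_def2 in H4. lra.
Qed.

Lemma tr_ex {X} (d : X -> X -> R) (w : ultrafilter X) (a : Xlim d w) :
  exists p : (X -> Prop) * (X -> X), translate_to d w (fst p) (snd p) (proj1_sig a).
Proof. destruct (proj2_sig a) as [D [t H]]. exists (D, t); exact H. Qed.

Definition trp {X} (d : X -> X -> R) (w : ultrafilter X) (a : Xlim d w) :=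
  proj1_sig (constructive_indefinite_description _ (tr_ex d w a)).
Definition tD {X} d w (a : Xlim d w) : X -> Prop := fst (trp d w a).
Definition tt {X} d w (a : Xlim d w) : X -> X := snd (trp d w a).

Lemma tr_spec {X} (d : X -> X -> R) (w : ultrafilter X) (a : Xlim d w) :
  translate_to d w (tD d w a) (tt d w a) (proj1_sig a).
Proof. unfold tD, tt, trp. exact (proj2_sig (constructive_indefinite_description _ (tr_ex d w a))). Qed.

Lemma dlim_spec {X} (d : X -> X -> R) (w : ultrafilter X) (a b : Xlim d w) :
  is_metric d -> bounded_geometry d ->
  ulim_R w (fun x => tD d w a x /\ tD d w b x) (fun x => d (tt d w a x) (tt d w b x)) (d_lim d w a b).
Proof.
  intros Hm Hbg. pose proof Hm as [Hpos [_ [Hsym Htri]]].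
  pose proof (tr_spec d w a) as Ha. pose proof (tr_spec d w b) as Hb.
  set (P := fun r : R => forall Da ta Db tb,
      translate_to d w Da ta (proj1_sig a) ->
      translate_to d w Db tb (proj1_sig b) ->
      ulim_R w (fun x => Da x /\ Db x) (fun x => d (ta x) (tb x)) r).
  assert (Hex : exists r, P r).
  { destruct Ha as [[[_ [Ka HKa]] HDa] _] , Hb as [[[_ [Kb HKb]] HDb] _].
    destruct (ulim_exists w (fun x => tD d w a x /\ tD d w b x) (fun x => d (tt d w a x) (tt d w b x)) (Rabs Ka + Rabs Kb))
      as [r Hr].
    - apply uf_inter; auto.
    - intros x [H1 H2]. split; auto. specialize (HKa x H1); specialize (HKb x H2).
      pose proof (Htri (tt d w a x) x (tt d w b x)). rewrite (Hsym _ x) in H.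
      pose proof (Rle_abs Ka); pose proof (Rle_abs Kb). lra.
    - exists r. intros Da ta Db tb Ha' Hb' eps Heps.
      pose proof (agree d w _ _ _ _ _ Hm Hbg Ha' (tr_spec d w a)) as A1.
      pose proof (agree d w _ _ _ _ _ Hm Hbg Hb' (tr_spec d w b)) as A2.
      apply (uf_mono X w (fun x => (Da x /\ tD d w a x /\ ta x = tt d w a x) /\
            (Db x /\ tD d w b x /\ tb x = tt d w b x) /\
            ((tD d w a x /\ tD d w b x) /\ Rabs (d (tt d w a x) (tt d w b x) - r) < eps))).
      + intros x [[H1 [_ H2]] [[H3 [_ H4]] [_ H5]]]. rewrite H2, H4. auto.
      + apply uf_inter3; auto. }
  pose proof (epsilon_spec (inhabits 0%R) P Hex) as HP.
  unfold d_lim. apply HP; apply tr_spec.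
Qed.

Lemma tight {T} (mu : (T -> Prop) -> R) (G : nat -> T -> Prop) :
  finite_pos_measure mu ->
  (forall k x, G k x -> G (S k) x) -> (forall x, exists k, G k x) ->
  forall eps, 0 < eps -> exists K, mu (fun x => ~ G K x) < eps.
Proof.
  intros Hmu Hmono Hcov eps Heps.
  assert (Hmono' : forall k k' x, (k <= k')%nat -> G k x -> G k' x).
  { intros k k' x Hk. induction Hk; auto. }
  set (Dl := fun n => match n with O => G O | S k => fun x => G (S k) x /\ ~ G k x end).
  assert (Hdis : forall i j x, i <> j -> Dl i x -> Dl j x -> False).
  { assert (forall i j x, (i < j)%nat -> Dl i x -> Dl j x -> False).
    { intros i [|j] x Hij Hi Hj; [lia|]. simpl in Hj. destruct Hj as [_ Hj]. apply Hj.
      destruct i; simpl in Hi; [|destruct Hi as [Hi _]]; (eapply Hmono'; [|exact Hi]; lia). }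
    intros i j x Hij. destruct (Nat.lt_gt_cases i j) as [[Hlt|Hlt] _]; auto; eauto.
    }
  assert (Hsum := proj2 Hmu Dl Hdis).
  assert (Hall : mu (fun x => exists n, Dl n x) = mu (fun _ => True)).
  { apply mu_ext; intro x; split; auto. intros _. destruct (Hcov x) as [k Hk].
    clear Hcov. induction k. exists O; exact Hk.
    destruct (classic (G k x)); auto. exists (S k); simpl; auto. }
  rewrite Hall in Hsum.
  assert (Hpart : forall K, sum_f_R0 (fun n => mu (Dl n)) K = mu (G K)).
  { induction K. reflexivity.
    change (sum_f_R0 (fun n => mu (Dl n)) (S K)) with (sum_f_R0 (fun n => mu (Dl n)) K + mu (Dl (S K))).
    rewrite IHK.
    rewrite <- (mu_add mu (G K) (Dl (S K))); auto.
    - apply mu_ext. intro x; simpl; split.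
      + intros [H|[H _]]; auto.
      + intro H. destruct (classic (G K x)); auto.
    - intros x H1 [_ H2]; auto. }
  destruct (Hsum eps Heps) as [K HK]. exists K. specialize (HK K (le_n K)).
  rewrite Hpart in HK. unfold Rdist in HK.
  assert (E : mu (fun _ => True) = mu (G K) + mu (fun x => ~ G K x)).
  { rewrite <- mu_add; auto. apply mu_ext; intro x; split; auto. intros _; apply classic. }
  rewrite E in HK. replace (mu (G K) - (mu (G K) + mu (fun x => ~ G K x))) with (- mu (fun x => ~ G K x)) in HK by ring.
  rewrite Rabs_Ropp in HK. pose proof (Rle_abs (mu (fun x => ~ G K x))). lra.
Qed.

Definition Xl {X} (d : X -> X -> R) (w : ultrafilter X) (K : nat) (a : Xlim d w) : Prop :=
  forall x, tD d w a x -> d x (tt d w a x) <= INR K.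

Lemma Xl_list {X} (d : X -> X -> R) (w : ultrafilter X) K :
  is_metric d -> bounded_geometry d ->
  exists l, NoDup l /\ forall a, Xl d w K a <-> In a l.
Proof.
  intros Hm Hbg. destruct (Hbg (INR K + 1)) as [N HN]. pose proof (pos_INR K); lra.
  apply (max_list _ N). intros l Hl Hin.
  assert (Hw : uf w (fun x => (forall a, In a l -> tD d w a x) /\
                  forall a, In a l -> forall b, In b l -> a <> b -> tt d w a x <> tt d w b x)).
  { apply uf_inter.
    - apply uf_list. intros a _. apply (tr_spec d w a).
    - apply uf_list. intros a _. apply uf_list. intros b _.
      destruct (classic (a = b)) as [->|Hab].
      + apply (uf_mono X w (fun _ => True)); [|apply uf_full]. intros x _ H; contradiction.
      + assert (Hab' : proj1_sig a <> proj1_sig b).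
        { intro E. apply Hab. destruct a, b; simpl in E; subst. f_equal; apply proof_irrelevance. }
        pose proof (distinct_lim d w _ _ _ _ _ _ (tr_spec d w a) (tr_spec d w b) Hab') as H.
        apply (uf_mono X w _ _ (fun x H _ => proj2 (proj2 H)) H). }
  destruct (uf_nonempty w _ Hw) as [x [H1 H2]].
  rewrite <- (length_map (fun a => tt d w a x)). apply (HN x).
  - apply NoDup_map_NoDup_ForallPairs; auto. intros a b Ha Hb E. apply NNPP; intro Hne; exact (H2 a Ha b Hb Hne E).
  - intros y Hy. apply in_map_iff in Hy. destruct Hy as [a [<- Ha]].
    specialize (Hin a Ha x (H1 a Ha)). lra.
Qed.

Lemma Xl_cover {X} (d : X -> X -> R) (w : ultrafilter X) (a : Xlim d w) : exists K, Xl d w K a.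
Proof.
  destruct (tr_spec d w a) as [[[_ [K HK]] _] _]. destruct (nat_above K) as [n Hn].
  exists n. intros x Hx. specialize (HK x Hx). lra.
Qed.

Lemma Xl_mono {X} (d : X -> X -> R) (w : ultrafilter X) K a : Xl d w K a -> Xl d w (S K) a.
Proof. intros H x Hx. specialize (H x Hx). rewrite S_INR. lra. Qed.

Lemma mu_split {T} (mu : (T -> Prop) -> R) (A B : T -> Prop) : finite_pos_measure mu ->
  mu A = mu (fun x => A x /\ B x) + mu (fun x => A x /\ ~ B x).
Proof.
  intro Hmu. rewrite <- mu_add; auto. apply mu_ext. intro x; split.
  intro Ha; destruct (classic (B x)); auto. intros [[]|[]]; auto.
  intros x [_ H1] [_ H2]; auto.
Qed.

Theorem lemma7p10 (X : Type) (d : X -> X -> R) (c : R) (f : nat -> nat) :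
  is_space d ->
  0 < c <= 1 ->
  MSP d c f ->
  forall w : ultrafilter X, in_boundary w ->
    MSP (d_lim d w) c f.
Proof.
  intros Hsp Hc [Hf Hmsp] w _. destruct Hsp as [Hm [_ Hbg]]. split; [exact Hf|].
  intros m mu Hmu.
  set (nu := fun x (A : X -> Prop) => mu (fun a => A (tt d w a x))).
  assert (Hnu : forall x, finite_pos_measure (nu x)).
  { intro x. split. intro A; apply (proj1 Hmu).
    intros A HA. apply (proj2 Hmu (fun n a => A n (tt d w a x))). intros i j a; apply HA. }
  set (Good := fun x (Rr : X -> X -> Prop) =>
    (forall y z, Rr y z -> d y z <= INR (f m)) /\
    (forall y z, Rr y y -> Rr z z -> ~ Rr y z -> INR m <= d y z) /\
    (forall y z, Rr y z -> Rr z y) /\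
    (forall y z u, Rr y z -> Rr z u -> Rr y u) /\
    c * mu (fun _ => True) <= mu (fun a => Rr (tt d w a x) (tt d w a x))).
  assert (HG : forall x, exists Rr, Good x Rr).
  { intro x. destruct (Hmsp m (nu x) (Hnu x)) as [I [Om [Hdis [Hsep [Hdiam Hmass]]]]].
    exists (fun y z => exists i, Om i y /\ Om i z). repeat split.
    - intros y z [i [H1 H2]]. eauto.
    - intros y z [i [Hi _]] [j [Hj _]] Hn. destruct (classic (i = j)) as [->|Hij].
      + exfalso; apply Hn; eauto.
      + eauto.
    - intros y z [i [H1 H2]]; eauto.
    - intros y z u [i [H1 H2]] [j [H3 H4]]. destruct (classic (i = j)) as [->|Hij]; eauto.
      exfalso; eapply Hdis; eauto.
    - unfold nu in Hmass. eapply Rle_trans; [exact Hmass|]. right. apply mu_ext.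
      intro a; split; [intros [i Hi]; eauto | intros [i [Hi _]]; eauto]. }
  set (Rx := fun x => epsilon (inhabits (fun _ _ : X => False)) (Good x)).
  assert (HR : forall x, Good x (Rx x)) by (intro x; exact (epsilon_spec _ _ (HG x))).
  set (Same := fun a b : Xlim d w => uf w (fun x => tD d w a x /\ tD d w b x /\ Rx x (tt d w a x) (tt d w b x))).
  assert (Ssym : forall a b, Same a b -> Same b a).
  { intros a b H. apply (uf_mono X w _ _ (fun x H => conj (proj1 (proj2 H)) (conj (proj1 H)
       (proj1 (proj2 (proj2 (HR x))) _ _ (proj2 (proj2 H))))) H). }
  assert (Strans : forall a b e, Same a b -> Same b e -> Same a e).
  { intros a b e H1 H2. apply (uf_mono X w _ _ (fun x H => conj (proj1 (proj1 H)) (conj (proj1 (proj2 (proj2 H)))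
       (proj1 (proj2 (proj2 (proj2 (HR x)))) _ _ _ (proj2 (proj2 (proj1 H))) (proj2 (proj2 (proj2 H))))))
      (uf_inter X w _ _ H1 H2)). }
  assert (Hcls : forall a a' z, Same a z -> Same a' z -> Same a = Same a').
  { intros a a' z H1 H2. apply pred_ext. intro e; split; intro H.
    - apply (Strans _ z); auto. apply (Strans _ a); auto.
    - apply (Strans _ z); auto. apply (Strans _ a'); auto. }
  assert (Srefl : forall a b, Same a b -> Same b b).
  { intros a b H. apply (Strans _ a); auto. }
  exists (Xlim d w -> Prop), (fun P b => (exists a, Same a a /\ P = Same a) /\ P b).
  split; [|split; [|split]].
  - intros i j x Hij [[a [Ha ->]] Hx] [[a' [Ha' ->]] Hx']. apply Hij; eapply Hcls; eauto.
  - intros i j x y Hij [[a [Ha ->]] Hx] [[a' [Ha' ->]] Hy].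
    assert (Hnxy : ~ Same x y).
    { intro H. apply Hij. apply (Hcls a a' y); auto. apply (Strans _ x); auto. }
    apply uf_not in Hnxy.
    apply (ulim_ge w _ _ _ _ (dlim_spec d w x y Hm Hbg)).
    apply (uf_mono X w (fun z => (tD d w x z /\ tD d w x z /\ Rx z (tt d w x z) (tt d w x z)) /\
       (tD d w y z /\ tD d w y z /\ Rx z (tt d w y z) (tt d w y z)) /\
       ~ (tD d w x z /\ tD d w y z /\ Rx z (tt d w x z) (tt d w y z)))); [|exact (uf_inter3 w _ _ _ (Srefl _ _ Hx) (Srefl _ _ Hy) Hnxy)].
    intros z [[H1 [_ H2]] [[H3 [_ H4]] H5]]. split; [split; auto|].
    apply (proj1 (proj2 (HR z))); auto.
  - intros i x y [[a [Ha ->]] Hx] [[a' [Ha' E]] Hy].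
    assert (Hxy : Same x y) by (apply (Strans _ a); auto).
    apply (ulim_le w _ _ _ _ (dlim_spec d w x y Hm Hbg)).
    apply (uf_mono X w _ _ (fun z H => conj (conj (proj1 H) (proj1 (proj2 H)))
        (proj1 (HR z) _ _ (proj2 (proj2 H)))) Hxy).
  - rewrite (mu_ext mu (fun b => exists P, (exists a, Same a a /\ P = Same a) /\ P b) (fun b => Same b b)).
    2:{ intro b; split. intros [P [[a [Ha E]] Hb]]. subst P. eauto.
        intro H. exists (Same b). split; auto. exists b; auto. }
    apply Rnot_lt_le; intro Hlt.
    set (eps := c * mu (fun _ => True) - mu (fun b => Same b b)).
    destruct (tight mu (Xl d w) Hmu (Xl_mono d w) (Xl_cover d w) eps ltac:(unfold eps; lra)) as [K HK].
    destruct (Xl_list d w K Hm Hbg) as [l [_ Hl]].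
    assert (Hx : uf w (fun x => forall a, In a l -> (Rx x (tt d w a x) (tt d w a x) <-> Same a a))).
    { apply uf_list. intros a _. destruct (classic (Same a a)) as [H|H].
      - apply (uf_mono X w _ _ (fun x H' => conj (fun _ => H) (fun _ => proj2 (proj2 H'))) H).
      - pose proof H as H0. apply uf_not in H.
        apply (uf_mono X w (fun x => tD d w a x /\ ~ (tD d w a x /\ tD d w a x /\ Rx x (tt d w a x) (tt d w a x)))).
        + intros x [H1 H2]. split; intro H3; [exfalso; apply H2; auto | contradiction].
        + apply uf_inter; [exact (proj2 (proj1 (tr_spec d w a))) | exact H]. }
    destruct (uf_nonempty w _ Hx) as [x Hxl].
    pose proof (proj2 (proj2 (proj2 (proj2 (HR x))))) as Hmass.
    rewrite (mu_split mu (fun a => Rx x (tt d w a x) (tt d w a x)) (Xl d w K) Hmu) in Hmass.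
    assert (E1 : mu (fun a => Rx x (tt d w a x) (tt d w a x) /\ Xl d w K a) <= mu (fun b => Same b b)).
    { apply mu_mono; auto. intros a [H1 H2]. apply (Hxl a); auto. apply Hl; auto. }
    assert (E2 : mu (fun a => Rx x (tt d w a x) (tt d w a x) /\ ~ Xl d w K a) <= mu (fun a => ~ Xl d w K a)).
    { apply mu_mono; auto. intros a [_ H]; auto. }
    unfold eps in HK. lra.
Qed.
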